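(* Let $(\mathcal{B},\mathcal{B}',\langle\cdot,\cdot\rangle,k)$ be an RKBS with kernel on a set $X$ such that $\{k(x,\cdot):x\in X\}$ is linearly independent, and let $(\varphi_t)_{t\ge0}$ be a semiflow on $X$ with Koopman semigroup $(U_t)_{t\ge0}$. For $t\ge0$ define $K_t:\mathrm{Span}\{k(x,\cdot):x\in X\}\to\mathrm{Span}\{k(x,\cdot):x\in X\}$ as the linear extension of $K_tk(x,\cdot):=k(\varphi_t(x),\cdot)$. Then $(K_t)_{t\ge0}$ is a well-defined family of linear operators and $K_t'=U_t$ for all $t\ge0$.
   Context: An RKBS with kernel on $X$: $(\mathcal{B},\mathcal{B}',\langle\cdot,\cdot\rangle,k)$ with $\mathcal{B},\mathcal{B}'$ Banach spaces of functions on $X$ (pointwise operations), continuous point evaluations on $\mathcal{B}$, $\langle\cdot,\cdot\rangle:\mathcal{B}\times\mathcal{B}'\to\mathbb{C}$ continuous bilinear, $k(x,\cdot)\in\mathcal{B}'$ and $g(x)=\langle g,k(x,\cdot)\rangle$ for all $g\in\mathcal{B}$, $x\in X$. A semiflow is a family of maps $\varphi_t:X\to X$, $t\ge0$, with $\varphi_0=\mathrm{id}$ and $\varphi_{t+s}=\varphi_t\circ\varphi_s$. Koopman semigroup: $U_tg:=g\circ\varphi_t$ on $D(U_t):=\{g\in\mathcal{B}:g\circ\varphi_t\in\mathcal{B}\}$. For an operator $T:D(T)\subset\mathcal{B}'\to\mathcal{B}'$ whose domain is dense w.r.t. $\langle\cdot,\cdot\rangle$ (i.e. $g\in\mathcal{B}$,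 $\langle g,h\rangle=0$ for all $h\in D(T)$ imply $g=0$), the adjoint $T':D(T')\subset\mathcal{B}\to\mathcal{B}$ is given by $D(T')=\{g\in\mathcal{B}:\exists z\in\mathcal{B},\ \langle g,Th\rangle=\langle z,h\rangle\ \forall h\in D(T)\}$, $T'g:=z$. *)

(* Defs.v *)
From HB Require Import structures.
From mathcomp Require Import all_boot all_order all_algebra.
From mathcomp Require Import all_classical all_reals all_analysis.
From mathcomp Require Import complex.
Set Implicit Arguments. Unset Strict Implicit. Unset Printing Implicit Defensive.
Import Order.TTheory GRing.Theory Num.Theory.
Import numFieldNormedType.Exports.
Local Open Scope ring_scope.

(* The complex numbers, seen as a numFieldType (so that they carry the normed topology). *)
Definition cpx (R : realType) : numFieldType := R[i].

(* ev : V -> (X -> C) realises V as a space of functions on X with pointwise operations *)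
Definition pointwise_linear (K : numFieldType) (V : lmodType K) (X : Type)
  (ev : V -> X -> K) : Prop :=
  forall (a : K) (u v : V) (x : X), ev (a *: u + v) x = a * ev u x + ev v x.

(* (B, B', <.,.>, k) is an RKBS with kernel on X.  B and B' are Banach spaces over C,
   identified with spaces of functions on X via the injective linear maps evB, evB'. *)
Definition is_RKBS (R : realType) (X : Type)
  (B B' : completeNormedModType (cpx R))
  (evB : B -> X -> cpx R) (evB' : B' -> X -> cpx R)
  (pair : B -> B' -> cpx R) (k : X -> B') : Prop :=
  [/\ (injective evB /\ pointwise_linear evB) /\
        (injective evB' /\ pointwise_linear evB'),
      (forall x : X, continuous (fun g : B => evB g x)),
      (forall (a : cpx R) (g1 g2 : B) (h : B'),
          pair (a *: g1 + g2) h = a * pair g1 h + pair g2 h) /\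
      (forall (a : cpx R) (g : B) (h1 h2 : B'),
          pair g (a *: h1 + h2) = a * pair g h1 + pair g h2),
      continuous (fun p : B * B' => pair p.1 p.2) &
      (forall (g : B) (x : X), evB g x = pair g (k x))].

Definition lin_indep (K : numFieldType) (V : lmodType K) (X : Type) (k : X -> V) : Prop :=
  forall (n : nat) (f : 'I_n -> X) (c : 'I_n -> K), injective f ->
    \sum_(i < n) c i *: k (f i) = 0 -> forall i, c i = 0.

Definition kspan (K : numFieldType) (V : lmodType K) (X : Type) (k : X -> V) : set V :=
  fun h => exists (n : nat) (f : 'I_n -> X) (c : 'I_n -> K),
    h = \sum_(i < n) c i *: k (f i).

Definition is_semiflow (R : realType) (X : Type) (phi : R -> X -> X) : Prop :=
  (forall x, phi 0 x = x) /\
  (forall t s : R, 0 <= t -> 0 <= s -> forall x, phi (t + s) x = phi t (phi s x)).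

(* graph of the Koopman operator U_t :  g \in D(U_t) and U_t g = z *)
Definition koopman_graph (R : realType) (X : Type) (B : completeNormedModType (cpx R))
  (evB : B -> X -> cpx R) (phi : R -> X -> X) (t : R) (g z : B) : Prop :=
  evB z = (evB g) \o (phi t).

(* a map T defined on the domain D (values outside D are irrelevant) is linear on D *)
Definition linear_on (K : numFieldType) (V W : lmodType K) (D : set V) (T : V -> W) : Prop :=
  forall (a : K) (h1 h2 : V), D h1 -> D h2 -> T (a *: h1 + h2) = a *: T h1 + T h2.

(* K is (a representative of) the operator K_t on Span{k(x,.)}:
   linear on the span, with K (k(x,.)) = k(phi_t x, .) *)
Definition is_Kt (R : realType) (X : Type) (B' : completeNormedModType (cpx R))
  (k : X -> B') (phi : R -> X -> X) (t : R) (K : B' -> B') : Prop :=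
  linear_on (kspan k) K /\ (forall x, K (k x) = k (phi t x)).

Definition pairing_dense (R : realType) (B B' : completeNormedModType (cpx R))
  (pair : B -> B' -> cpx R) (D : set B') : Prop :=
  forall g : B, (forall h, D h -> pair g h = 0) -> g = 0.

(* graph of the adjoint T' of T : D(T) = D -> B' :  g \in D(T') and T' g = z *)
Definition adjoint_graph (R : realType) (B B' : completeNormedModType (cpx R))
  (pair : B -> B' -> cpx R) (D : set B') (T : B' -> B') (g z : B) : Prop :=
  forall h, D h -> pair g (T h) = pair z h.

(* Main.v *)
Require Import Defs.
From HB Require Import structures.
From mathcomp Require Import all_boot all_order all_algebra.
From mathcomp Require Import all_classical all_reals all_analysis.
From mathcomp Require Import complex.
Import Order.TTheory GRing.Theory Num.Theory.
Import numFieldNormedType.Exports.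
Local Open Scope ring_scope.

Lemma zero_lem (K : numFieldType) (V W : lmodType K) (X : Type) (k : X -> V) :
  lin_indep k -> forall n (f : 'I_n -> X) (c : 'I_n -> K),
  \sum_(i < n) c i *: k (f i) = 0 -> forall F : X -> W, \sum_(i < n) c i *: F (f i) = 0.
Proof.
move=> li n f c H0 F.
pose rep i := odflt i [pick j | `[< f j = f i >]].
have repP i : f (rep i) = f i.
  by rewrite /rep; case: pickP => [j /asboolP //|].
have repE i i' : f i = f i' -> rep i = rep i'.
  move=> e; rewrite /rep e; case: pickP => //= H.
  by have := H i'; rewrite asboolT.
have repR i : rep (rep i) = rep i by apply: repE; rewrite repP.
pose A : pred 'I_n := [pred j | rep j == j].
pose d j := \sum_(i | rep i == j) c i.
have eqsum (W0 : lmodType K) (G : X -> W0) : \sum_(i < n) c i *: G (f i) =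
    \sum_(l < #|A|) d (@enum_val _ A l) *: G (f (@enum_val _ A l)).
  transitivity (\sum_(i < n) c i *: G (f (rep i))).
    by apply: eq_bigr => i _; rewrite repP.
  rewrite (partition_big rep (fun j => rep j == j)); last by move=> i _; rewrite repR.
  rewrite -(big_enum_val (fun j => d j *: G (f j))).
  apply: eq_bigr => j _; rewrite /d scaler_suml.
  by apply: eq_big => [i //|i /eqP ->].
have Hd : forall l, d (@enum_val _ A l) = 0.
  move=> l0; apply: (li _ (fun l => f (@enum_val _ A l)) (fun l => d (@enum_val _ A l)) _ _ l0).
    move=> l1 l2 /repE e; apply: enum_val_inj.
    have := enum_valP l1; have := enum_valP l2; rewrite !inE => /eqP e2 /eqP e1.
    by rewrite -e1 -e2.
  by rewrite /= -(eqsum _ k).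
rewrite eqsum; apply: big1 => l _; by rewrite Hd scale0r.
Qed.

Arguments zero_lem [K V W X k].

Lemma xxx0 (V : zmodType) (x : V) : x = x + x -> x = 0.
Proof. by rewrite -{1}(addr0 x) => /addrI ->. Qed.

Definition comb {T : Type} {n m : nat} (u : 'I_n -> T) (v : 'I_m -> T) (i : 'I_(n + m)%N) : T :=
  match fintype.split i with inl a => u a | inr b => v b end.

Lemma sum_comb (K : numFieldType) (W : lmodType K) (T : Type) n m
  (c : 'I_n -> K) (e : 'I_m -> K) (f : 'I_n -> T) (g : 'I_m -> T) (F : T -> W) :
  \sum_(i < (n + m)%N) comb c e i *: F (comb f g i) =
  \sum_(i < n) c i *: F (f i) + \sum_(j < m) e j *: F (g j).
Proof.
rewrite big_split_ord /=; congr (_ + _); apply: eq_bigr => i _; rewrite /comb.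
  by rewrite (@unsplitK n m (inl i)).
by rewrite (@unsplitK n m (inr i)).
Qed.

Lemma wd_lem (K : numFieldType) (V : lmodType K) (X : Type) (k : X -> V) :
  lin_indep k -> forall n (f : 'I_n -> X) (c : 'I_n -> K) m (g : 'I_m -> X) (e : 'I_m -> K),
  \sum_(i < n) c i *: k (f i) = \sum_(j < m) e j *: k (g j) ->
  forall (W : lmodType K) (F : X -> W),
  \sum_(i < n) c i *: F (f i) = \sum_(j < m) e j *: F (g j).
Proof.
move=> li n f c m g e E W F.
have Z := @zero_lem _ _ W _ _ li _ (comb f g) (comb c (fun j => - e j)).
apply/eqP; rewrite -subr_eq0; apply/eqP.
have -> : \sum_(j < m) e j *: F (g j) = - \sum_(j < m) (- e j) *: F (g j).
  by rewrite -sumrN; apply: eq_bigr => j _; rewrite scaleNr opprK.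
rewrite opprK -sum_comb; apply: Z.
rewrite sum_comb E.
have -> : \sum_(j < m) - e j *: k (g j) = - \sum_(j < m) e j *: k (g j).
  by rewrite -sumrN; apply: eq_bigr => j _; rewrite scaleNr.
by rewrite subrr.
Qed.

Arguments wd_lem [K V X k].

Definition Kc (K : numFieldType) (V : lmodType K) (X : Type) (k : X -> V) (psi : X -> X) (h : V) : V :=
  xget 0 (fun w => exists n (f : 'I_n -> X) (c : 'I_n -> K),
     h = \sum_(i < n) c i *: k (f i) /\ w = \sum_(i < n) c i *: k (psi (f i))).

Arguments Kc [K V X].

Lemma Krep (K : numFieldType) (V : lmodType K) (X : Type) (k : X -> V) (psi : X -> X) :
  lin_indep k -> forall n (f : 'I_n -> X) (c : 'I_n -> K),
  Kc k psi (\sum_(i < n) c i *: k (f i)) = \sum_(i < n) c i *: k (psi (f i)).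
Proof.
move=> li n f c; rewrite /Kc.
set P := (fun w => _).
have [m [g [e [E1 E2]]]] : P (xget 0 P).
  by apply: xgetPex; exists (\sum_(i < n) c i *: k (psi (f i))); exists n, f, c.
by rewrite E2; exact: (wd_lem li _ _ _ _ _ _ (esym E1) _ (fun x => k (psi x))).
Qed.

Arguments Krep [K V X k].

Lemma Klin (K : numFieldType) (V : lmodType K) (X : Type) (k : X -> V) (T : V -> V) :
  linear_on (kspan k) T -> forall n (f : 'I_n -> X) (c : 'I_n -> K),
  T (\sum_(i < n) c i *: k (f i)) = \sum_(i < n) c i *: T (k (f i)).
Proof.
move=> lT; elim=> [|n IH] f c.
  rewrite !big_ord0; apply: xxx0.
  have H0 : kspan k 0 by exists 0%N, f, c; rewrite big_ord0.
  by have := lT 1 0 0 H0 H0; rewrite !scale1r addr0.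
rewrite !big_ord_recr /= addrC lT; last first.
- by exists n, (fun i => f (widen_ord (leqnSn n) i)), (fun i => c (widen_ord (leqnSn n) i)).
- by exists 1%N, (fun _ => f ord_max), (fun _ => 1); rewrite big_ord1 scale1r.
by rewrite IH addrC.
Qed.

Arguments Klin [K V X k T].

Lemma lin_sum (K : numFieldType) (V : lmodType K) (L : V -> K) :
  (forall a u v, L (a *: u + v) = a * L u + L v) -> forall n (c : 'I_n -> K) (w : 'I_n -> V),
  L (\sum_(i < n) c i *: w i) = \sum_(i < n) c i * L (w i).
Proof.
move=> lL; elim=> [|n IH] c w.
  rewrite !big_ord0; apply: xxx0.
  by have := lL 1 0 0; rewrite scale1r addr0 mul1r.
by rewrite !big_ord_recr /= addrC lL IH addrC.
Qed.

Lemma kx_span (K : numFieldType) (V : lmodType K) (X : Type) (k : X -> V) x : kspan k (k x).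
Proof. by exists 1%N, (fun _ => x), (fun _ => 1); rewrite big_ord1 scale1r. Qed.

Arguments lin_sum [K V L].
Arguments kx_span [K V X].

Theorem proposition2 (R : realType) (X : Type)
  (B B' : completeNormedModType (cpx R))
  (evB : B -> X -> cpx R) (evB' : B' -> X -> cpx R)
  (pair : B -> B' -> cpx R) (k : X -> B') (phi : R -> X -> X) :
  is_RKBS evB evB' pair k -> lin_indep k -> is_semiflow phi ->
  forall t : R, 0 <= t ->
    [/\ (exists K : B' -> B', is_Kt k phi t K),
        (forall K1 K2 : B' -> B', is_Kt k phi t K1 -> is_Kt k phi t K2 ->
           forall h, kspan k h -> K1 h = K2 h),
        pairing_dense pair (kspan k) &
        (forall K : B' -> B', is_Kt k phi t K ->
           forall g z : B,
             adjoint_graph pair (kspan k) K g z <-> koopman_graph evB phi t g z)].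
Proof.
move=> [[[injB linB] _] _ [pl pr] _ evk] li _ t t0; split.
- exists (Kc k (phi t)); split.
    move=> a h1 h2 [n [f [c ->]]] [m [g [e ->]]].
    have E : forall (F : X -> B'), a *: (\sum_(i < n) c i *: F (f i)) + \sum_(j < m) e j *: F (g j)
       = \sum_(i < (n + m)%N) comb (fun i => a * c i) e i *: F (comb f g i).
      by move=> F; rewrite sum_comb scaler_sumr; congr (_ + _); apply: eq_bigr => i _; rewrite scalerA.
    by rewrite (E k) !Krep // (E (fun x => k (phi t x))).
  move=> x; have := Krep (phi t) li 1 (fun _ => x) (fun _ => 1).
  by rewrite !big_ord1 !scale1r.
- move=> K1 K2 [l1 x1] [l2 x2] h [n [f [c ->]]].
  by rewrite !Klin //; apply: eq_bigr => i _; rewrite x1 x2.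
- move=> g H; apply: injB; apply/funext => x.
  rewrite evk H; last exact: kx_span.
  apply/esym/xxx0; by have := linB 1 0 0 x; rewrite scale1r addr0 mul1r.
- move=> K [lK xK] g z; split.
    move=> H; apply/funext => x /=.
    by rewrite evk -(H (k x) (kx_span k x)) xK -evk.
  move=> E h [n [f [c ->]]].
  rewrite Klin // !(lin_sum (fun a u v => pr a _ u v)).
  apply: eq_bigr => i _; rewrite xK -!evk; congr (_ * _).
  by have := congr1 (fun F => F (f i)) E.
Qed.
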